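(* Let $G$ be a graph, $X\subseteq V(G)$ with $F:=G-X$ a pseudoforest, and $k$ an integer. Assume that: (1) there is no $v\in X$ with $\mathrm{Conf}_F(\{v\})\ge |X|$; (2) there are no distinct non-adjacent $u,v\in X$ with $\mathrm{Conf}_F(\{u,v\})\ge|X|$; (3) for all distinct $u,v,w\in X$ such that $\{u,v,w\}$ is independent in $G$ and $\mathrm{Conf}_F(\{u,v,w\})\ge|X|$, there is an anchor triangle $P$ with $N_G(V(P))=\{u,v,w\}$. Let $P$ be a connected component of $F$ which is not a non-redundant anchor triangle and such that $\mathrm{Conf}_P(X')=0$ for every chunk $X'$. Then $G$ has an independent set of size at least $k$ if and only if $G-V(P)$ has an independent set of size at least $k-\alpha(P)$.
   Context: All graphs are finite, simple and undirected; a pseudoforest is a graph each of whose connected components contains at most one cycle. $\alpha(H)$ is the independence number of $H$. For a subgraph $F'\subseteq F$ and $X'\subseteq X$, $\mathrm{Conf}_{F'}(X') := \alpha(F') - \alpha(F' - N_G(X'))$, where $N_G(S)$ is the set of vertices outside $S$ adjacent to some vertex of $S$. A chunk is a set $X'\subseteq X$ that is independent in $G$, satisfies $1\le |X'|\le 3$, and has $\mathrm{Conf}_F(X') < |X|$. An anchor triangle is a connected component $P$ of $F$ with $V(P)=\{p_1,p_2,p_3\}$ such that there are vertices $x_1,x_2,x_3\in X$ with $N_G(p_1)=\{p_2,p_3,x_1\}$, $N_G(p_2)=\{p_1,p_3,x_2\}$, $N_G(p_3)=\{p_1,p_2,x_3\}$; it is non-redundant if no other anchor triangle has the same open neighborhood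 in $G$. *)

(* Defs.v *)
(* A graph G is a symmetric irreflexive relation e on a finType T;
   (induced) subgraphs of G are given by their vertex sets S : {set T}. *)
From mathcomp Require Import all_boot all_order all_algebra.
Set Implicit Arguments. Unset Strict Implicit. Unset Printing Implicit Defensive.

Section GraphDefs.
Variables (T : finType) (e : rel T).

Definition indep (I : {set T}) : bool :=
  [forall x in I, forall y in I, ~~ e x y].

Definition alpha (S : {set T}) : nat :=
  \max_(I : {set T} | (I \subset S) && indep I) #|I|.

Definition nbhd (S : {set T}) : {set T} :=
  [set y | (y \notin S) && [exists x in S, e x y]].

Definition conf (S Xp : {set T}) : nat :=
  alpha S - alpha (S :\: nbhd Xp).

Definition connected_in (P : {set T}) : Prop :=
  forall x y, x \in P -> y \in P ->
    connect (fun a b => [&& a \in P, b \in P & e a b]) x y.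

Definition component (S P : {set T}) : Prop :=
  [/\ P \subset S, P != set0, connected_in P &
      forall x y, x \in P -> y \in S :\: P -> ~~ e x y].

Definition edges_in (P : {set T}) : {set {set T}} :=
  [set E : {set T} | [&& #|E| == 2, E \subset P &
                        [forall x in E, forall y in E, (x != y) ==> e x y]]].

(* G[S] is a pseudoforest: every connected component has at most one cycle,
   i.e. (equivalently, for a connected graph) at most as many edges as vertices *)
Definition pseudoforest (S : {set T}) : Prop :=
  forall P, component S P -> #|edges_in P| <= #|P|.

Definition anchor_triangle (X P : {set T}) : Prop :=
  component (~: X) P /\
  exists p1 p2 p3 x1 x2 x3,
    [/\ P = [set p1; p2; p3] /\ [&& p1 != p2, p1 != p3 & p2 != p3],
        [&& x1 \in X, x2 \in X & x3 \in X],
        [set y | e p1 y] = [set p2; p3; x1],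
        [set y | e p2 y] = [set p1; p3; x2] &
        [set y | e p3 y] = [set p1; p2; x3]].

Definition nonredundant_anchor_triangle (X P : {set T}) : Prop :=
  anchor_triangle X P /\
  forall Q, anchor_triangle X Q -> Q <> P -> nbhd Q <> nbhd P.

Definition chunk (X Xp : {set T}) : Prop :=
  [/\ Xp \subset X, indep Xp, 1 <= #|Xp| <= 3 & conf (~: X) Xp < #|X|].

End GraphDefs.

(* Main.v *)
Require Import Defs.
From mathcomp Require Import all_boot all_order all_algebra.
From mathcomp Require Import zify.
From Stdlib Require Import Classical.
Set Implicit Arguments. Unset Strict Implicit. Unset Printing Implicit Defensive.

Ltac eqcases := repeat match goal with |- context [?a == ?b] => case: (a =P b) => [/= ?|/= ?]; subst end.
Ltac bsolve := repeat match goal with |- context [?a \in ?b] => case: (a \in b) end; rewrite /= ?andbF ?andbT ?orbF ?orbT //.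
Ltac ssub1 H1 := let x := fresh "x" in apply/subsetP => x; move: H1; rewrite !inE; eqcases; bsolve.
Ltac ssub2 H1 H2 := let x := fresh "x" in apply/subsetP => x; move: H1 H2; rewrite !inE; eqcases; bsolve.
Ltac ssub := let x := fresh "x" in apply/subsetP => x; rewrite !inE; eqcases; bsolve.


Section Aux.
Variables (T : finType) (e : rel T).
Hypothesis esym : symmetric e.
Hypothesis eirr : irreflexive e.

Lemma indepP (I : {set T}) :
  reflect (forall x y, x \in I -> y \in I -> ~~ e x y) (indep e I).
Proof.
apply: (iffP forall_inP) => [H x y xI yI | H x xI].
  by move/forall_inP: (H x xI) => /(_ y yI).
by apply/forall_inP => y yI; apply: H.
Qed.

Lemma indep_sub (A B : {set T}) : A \subset B -> indep e B -> indep e A.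
Proof.
move=> sAB /indepP H; apply/indepP => x y xA yA; apply: H; exact: (subsetP sAB).
Qed.

Lemma alpha_ge (S I : {set T}) : I \subset S -> indep e I -> #|I| <= alpha e S.
Proof.
move=> sIS iI; rewrite /alpha.
exact: (@leq_bigmax_cond _ (fun I : {set T} => (I \subset S) && indep e I) (fun I : {set T} => #|I|) I (introT andP (conj sIS iI))).
Qed.

Lemma alpha_wit (S : {set T}) : exists I : {set T}, [/\ I \subset S, indep e I & #|I| = alpha e S].
Proof.
have h0 : 0 < #|[pred I : {set T} | (I \subset S) && indep e I]|.
  apply/card_gt0P; exists set0; rewrite inE sub0set /=.
  by apply/indepP => x y; rewrite inE.
have [I0 HI0 Heq] := eq_bigmax_cond (fun I : {set T} => #|I|) h0.
move: HI0; rewrite inE => /andP [s i]; exists I0; split => //.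
Qed.

Lemma alpha_mono (S Sp : {set T}) : S \subset Sp -> alpha e S <= alpha e Sp.
Proof.
move=> sS; have [I [sI iI <-]] := alpha_wit S.
apply: alpha_ge => //; exact: subset_trans sS.
Qed.

Lemma alpha_sub_lt (S Sp : {set T}) V : S \subset Sp -> alpha e Sp < V -> alpha e S < V.
Proof. by move=> /alpha_mono h1 h2; apply: leq_ltn_trans h1 h2. Qed.

Lemma alpha_leaf (V : {set T}) l u : l \in V -> (u = l \/ e l u) ->
  (forall y, y \in V -> e l y -> y = u) ->
  alpha e V = (alpha e (V :\: [set l; u])).+1.
Proof.
move=> lV Hu Hl; apply/eqP; rewrite eqn_leq; apply/andP; split.
  have [I [sI iI <-]] := alpha_wit V.
  have hc : #|I :&: [set l; u]| <= 1.
    case: Hu => [->|elu]; first by rewrite setUid (leq_trans (subset_leq_card (subsetIr _ _))) ?cards1.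
    case: (boolP (l \in I)) => lI.
      have uI : u \notin I.
        apply/negP => uI; move/indepP: iI => /(_ l u lI uI); by rewrite elu.
      rewrite -(cards1 l); apply: subset_leq_card; apply/subsetP => x.
      rewrite !inE => /andP [xI /orP [//|/eqP xu]]; by move: uI; rewrite -xu xI.
    rewrite -(cards1 u); apply: subset_leq_card; apply/subsetP => x.
    rewrite !inE => /andP [xI /orP [/eqP xl|//]]; by move: lI; rewrite -xl xI.
  have hs : #|I :\: [set l; u]| <= alpha e (V :\: [set l; u]).
    apply: alpha_ge; last by apply: indep_sub iI; apply: subsetDl.
    exact: setSD.
  by rewrite -(cardsID [set l; u] I); lia.
have [J [sJ iJ <-]] := alpha_wit (V :\: [set l; u]).
have lJ : l \notin J.
  apply/negP => /(subsetP sJ); by rewrite !inE eqxx.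
have -> : (#|J|).+1 = #|l |: J| by rewrite cardsU1 lJ.
apply: alpha_ge.
  apply/subsetP => x; rewrite !inE => /orP [/eqP ->//|/(subsetP sJ)].
  by rewrite !inE => /andP [].
apply/indepP => x y; rewrite !inE => /orP [/eqP ->|xJ] /orP [/eqP ->|yJ].
- by rewrite eirr.
- apply/negP => ely; have yV : y \in V by move: (subsetP sJ y yJ); rewrite !inE => /andP [].
  have := Hl y yV ely => yu; move: (subsetP sJ y yJ); by rewrite !inE yu eqxx orbT.
- apply/negP => eyl; rewrite esym in eyl.
  have xV : x \in V by move: (subsetP sJ x xJ); rewrite !inE => /andP [].
  have := Hl x xV eyl => xu; move: (subsetP sJ x xJ); by rewrite !inE xu eqxx orbT.
- by move/indepP: iJ; apply.
Qed.

Definition nb (u : T) : {set T} := [set y | e u y].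

Lemma alpha_split_le (V : {set T}) u : u \in V ->
  alpha e V <= maxn (alpha e (V :\ u)) (alpha e (V :\: (u |: nb u))).+1.
Proof.
move=> uV; have [I [sI iI <-]] := alpha_wit V.
case: (boolP (u \in I)) => uI.
  have h : #|I :\ u| <= alpha e (V :\: (u |: nb u)).
    apply: alpha_ge; last by apply: indep_sub iI; apply: subsetDl.
    apply/subsetP => x; rewrite !inE => /andP [xu xI].
    rewrite (subsetP sI x xI) andbT negb_or xu /=.
    by move/indepP: iI => /(_ u x uI xI).
  have := cardsD1 u I; rewrite uI; lia.
have h : #|I| <= alpha e (V :\ u).
  apply: alpha_ge => //; apply/subsetP => x xI; rewrite !inE (subsetP sI x xI) andbT.
  by apply/eqP => xu; move: uI; rewrite -xu xI.
lia.
Qed.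

Lemma alpha_split_ge (V : {set T}) u : u \in V ->
  (alpha e (V :\: (u |: nb u))).+1 <= alpha e V.
Proof.
move=> uV; have [J [sJ iJ <-]] := alpha_wit (V :\: (u |: nb u)).
have uJ : u \notin J by apply/negP => /(subsetP sJ); rewrite !inE eqxx.
have -> : (#|J|).+1 = #|u |: J| by rewrite cardsU1 uJ.
apply: alpha_ge.
  apply/subsetP => x; rewrite !inE => /orP [/eqP ->//|/(subsetP sJ)].
  by rewrite !inE => /andP [].
apply/indepP => x y; rewrite !inE => /orP [/eqP ->|xJ] /orP [/eqP ->|yJ].
- by rewrite eirr.
- by move: (subsetP sJ y yJ); rewrite !inE negb_or => /andP [/andP [_ ->]].
- by move: (subsetP sJ x xJ); rewrite !inE negb_or esym => /andP [/andP [_ ->]].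
- by move/indepP: iJ; apply.
Qed.

End Aux.


Lemma sum_ind (U : finType) (A : {set U}) (p : pred U) :
  \sum_(i in A) (p i : nat) = #|[set i in A | p i]|.
Proof.
transitivity (\sum_(i in A) (if p i then 1 else 0)).
  by apply: eq_bigr => i _; case: (p i).
rewrite -big_mkcondr sum1_card; apply: eq_card => i; by rewrite !inE.
Qed.

Section Deg.
Variables (T : finType) (e : rel T).
Hypothesis esym : symmetric e.
Hypothesis eirr : irreflexive e.

Definition deg (A : {set T}) v := #|[set y in A | e v y]|.

Lemma edge2_in (A : {set T}) v y : v \in A -> y \in A -> e v y ->
  [set v; y] \in edges_in e A.
Proof.
move=> vA yA evy; rewrite inE cards2.
have vy : v != y by apply/eqP => vy; move: evy; rewrite vy eirr.
rewrite vy /=; apply/andP; split.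
  by apply/subsetP => x; rewrite !inE => /orP [/eqP->|/eqP->].
apply/forall_inP => x; rewrite !inE => /orP [] /eqP -> ; apply/forall_inP => z;
  rewrite !inE => /orP [] /eqP -> ; rewrite ?eqxx ?evy ?implybT //.
by rewrite esym evy implybT.
Qed.

Lemma deg_edges (A : {set T}) v : v \in A ->
  deg A v = #|[set E in edges_in e A | v \in E]|.
Proof.
move=> vA.
have -> : [set E in edges_in e A | v \in E] = [set [set v; y] | y in [set y in A | e v y]].
  apply/setP => E; rewrite in_set; apply/idP/imsetP.
    case/andP; rewrite inE => /and3P [/cards2P [a [b [ab ->]]] sab /forall_inP Hf] vE.
    have aA : a \in A by apply: (subsetP sab); rewrite !inE eqxx.
    have bA : b \in A by apply: (subsetP sab); rewrite !inE eqxx orbT.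
    have eab : e a b.
      have aE : a \in [set a; b] by rewrite !inE eqxx.
      have bE : b \in [set a; b] by rewrite !inE eqxx orbT.
      move/forall_inP: (Hf a aE) => /(_ b bE).
      by rewrite ab.
    move: vE; rewrite !inE => /orP [] /eqP ->.
      by exists b => //; rewrite !inE bA eab.
    by exists a; [rewrite !inE aA esym eab | rewrite setUC].
  case=> y; rewrite inE => /andP [yA evy] ->.
  by rewrite edge2_in // !inE eqxx.
rewrite card_in_imset //.
move=> y1 y2; rewrite !inE => /andP [_ e1] /andP [_ e2] H.
have : y1 \in [set v; y2] by rewrite -H !inE eqxx orbT.
rewrite !inE => /orP [/eqP y1v|/eqP //].
by move: e1; rewrite y1v eirr.
Qed.

Lemma handshake (A : {set T}) : \sum_(v in A) deg A v = 2 * #|edges_in e A|.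
Proof.
transitivity (\sum_(v in A) \sum_(E in edges_in e A) (v \in E : nat)).
  apply: eq_bigr => v vA; rewrite deg_edges // sum_ind.
  by apply: eq_card => E; rewrite !inE.
rewrite exchange_big /=.
transitivity (\sum_(E in edges_in e A) 2).
  apply: eq_bigr => E; rewrite inE => /and3P [/eqP c2 sEA _].
  rewrite sum_ind -c2; apply: eq_card => x; rewrite !inE.
  by apply/andP/idP => [[]//|xE]; split => //; apply: (subsetP sEA).
by rewrite sum_nat_const mulnC.
Qed.

End Deg.



Section Helly.
Variables (T : finType) (e : rel T).
Hypothesis esym : symmetric e.
Hypothesis eirr : irreflexive e.

Definition HP b (V : {set T}) := forall D : {set T}, alpha e (V :\: D) < alpha e V ->
  exists D' : {set T}, [/\ D' \subset D, #|D'| <= b & alpha e (V :\: D') < alpha e V].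

Lemma leaf_step b (V : {set T}) l u : 2 <= b -> l \in V -> (u = l \/ e l u) ->
  (forall y, y \in V -> e l y -> y = u) -> HP b (V :\: [set l; u]) -> HP b V.
Proof.
move=> b2 lV Hu Hl IH D HD.
set W := V :\: [set l; u].
have HaV : alpha e V = (alpha e W).+1 := alpha_leaf esym eirr lV Hu Hl.
have HlS : forall S : {set T}, S \subset V -> forall y, y \in S -> e l y -> y = u.
  by move=> S sS y yS ely; exact: Hl y (subsetP sS y yS) ely.
case: (boolP (l \in D)) => lD; last first.
  have lZ : l \in V :\: D by rewrite inE lD lV.
  have HZ := alpha_leaf esym eirr lZ Hu (HlS _ (subsetDl V D)).
  have : alpha e (W :\: D) < alpha e W.
    have : alpha e (W :\: D) <= alpha e ((V :\: D) :\: [set l; u]).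
      by apply: alpha_mono; rewrite /W; ssub.
    lia.
  move/IH => [D' [sD' cD' HD']]; exists D'; split => //.
  have lD' : l \notin D' by apply/negP => /(subsetP sD'); rewrite (negbTE lD).
  have lZ' : l \in V :\: D' by rewrite inE lD' lV.
  rewrite HaV (alpha_leaf esym eirr lZ' Hu (HlS _ (subsetDl V D'))) ltnS.
  apply: leq_ltn_trans HD'; apply: alpha_mono; rewrite /W; ssub.
case: (boolP (u \in V :\: D)) => uZ; last first.
  exists ([set l; u] :&: D); split.
  - exact: subsetIr.
  - apply: leq_trans (subset_leq_card (subsetIl _ _)) _.
    rewrite cards2; case: (l != u) => //; exact: ltnW.
  - rewrite HaV ltnS; apply: alpha_mono; rewrite /W; ssub2 uZ lD.
have ul : u != l by apply/eqP => ul; move: uZ; rewrite ul inE lD.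
have h1 : alpha e (W :\: (D :|: nb e u)) < alpha e W.
  have h2 := alpha_split_ge esym eirr uZ.
  have : alpha e (W :\: (D :|: nb e u)) <= alpha e ((V :\: D) :\: (u |: nb e u)).
    by apply: alpha_mono; rewrite /W; ssub.
  lia.
move/IH: h1 => [D2 [sD2 cD2 HD2]]; rewrite -/W in HD2.
have uD : u \notin D by move: uZ; rewrite inE => /andP [].
case: (boolP (D2 \subset D)) => sD2D.
  exists D2; split => //.
  have uD2 : u \notin D2 by apply/negP => /(subsetP sD2D); rewrite (negbTE uD).
  have uZ2 : u \in V :\: D2 by rewrite inE uD2; move: uZ; rewrite inE => /andP [].
  case: (boolP (l \in D2)) => lD2.
    have h3 := alpha_split_le e uZ2.
    have a1 : alpha e ((V :\: D2) :\ u) <= alpha e (W :\: D2).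
      by apply: alpha_mono; rewrite /W; ssub1 lD2.
    have a2 : alpha e ((V :\: D2) :\: (u |: nb e u)) <= alpha e (W :\: D2).
      by apply: alpha_mono; rewrite /W; ssub1 lD2.
    rewrite HaV; lia.
  have lZ' : l \in V :\: D2 by rewrite inE lD2 lV.
  rewrite HaV (alpha_leaf esym eirr lZ' Hu (HlS _ (subsetDl V D2))) ltnS.
  apply: leq_ltn_trans HD2; apply: alpha_mono; rewrite /W; ssub.
move/subsetPn: sD2D => [r rD2 rnD].
exists (l |: (D2 :&: D)); split.
- by ssub1 lD.
- have c1 : #|D2 :&: D| <= #|D2 :\ r| by apply: subset_leq_card; ssub2 rnD rD2.
  have c2 := cardsD1 r D2; rewrite rD2 in c2.
  have c3 := cardsU1 l (D2 :&: D).
  case: (l \notin D2 :&: D) c3 => /= c3; lia.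
- have uZ2 : u \in V :\: (l |: (D2 :&: D)).
    rewrite !inE (negbTE uD) andbF orbF ul /=; by move: uZ; rewrite inE => /andP [].
  have h3 := alpha_split_le e uZ2.
  have a1 : alpha e ((V :\: (l |: (D2 :&: D))) :\ u) <= alpha e W.
    by apply: alpha_mono; rewrite /W; ssub.
  have a2 : alpha e ((V :\: (l |: (D2 :&: D))) :\: (u |: nb e u)) <= alpha e (W :\: D2).
    apply: alpha_mono; apply/subsetP => x; rewrite !inE negb_or.
    move=> /andP [/andP [xu xR] /andP [xD' xV]].
    have xD2 : x \notin D2.
      apply/negP => xD2; move: (subsetP sD2 x xD2); rewrite !inE (negbTE xR) orbF => xD.
      by move: xD'; rewrite xD2 xD orbT.
    move: xD' xu; rewrite xD2 xV /=; eqcases; bsolve.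
  rewrite HaV; lia.
Qed.

End Helly.



Section Helly2.
Variables (T : finType) (e : rel T).
Hypothesis esym : symmetric e.
Hypothesis eirr : irreflexive e.

Lemma alpha_splitC (S C : {set T}) :
  (forall x y, x \in S :&: C -> y \in S :\: C -> ~~ e x y) ->
  alpha e S = alpha e (S :&: C) + alpha e (S :\: C).
Proof.
move=> Hc; apply/eqP; rewrite eqn_leq; apply/andP; split.
  have [I [sI iI <-]] := alpha_wit e S.
  rewrite -(cardsID C I) leq_add //; apply: alpha_ge.
  - by apply: setSI.
  - by apply: indep_sub iI; apply: subsetIl.
  - by apply: setSD.
  - by apply: indep_sub iI; apply: subsetDl.
have [J1 [s1 i1 <-]] := alpha_wit e (S :&: C).
have [J2 [s2 i2 <-]] := alpha_wit e (S :\: C).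
have d : J1 :&: J2 = set0.
  apply/setP => x; rewrite !inE; apply/negP => /andP [/(subsetP s1) x1 /(subsetP s2) x2].
  by move: x1 x2; rewrite !inE => /andP [_ ->] /andP [].
rewrite -(cardsUI J1 J2) d cards0 addn0; apply: alpha_ge.
  apply/subsetP => x; rewrite inE => /orP [/(subsetP s1)|/(subsetP s2)]; rewrite !inE;
  by case/andP.
apply/indepP => x y; rewrite inE => /orP [x1|x2]; rewrite inE => /orP [y1|y2].
- by move/indepP: i1; apply.
- exact: Hc (subsetP s1 x x1) (subsetP s2 y y2).
- rewrite esym; exact: Hc (subsetP s1 y y1) (subsetP s2 x x2).
- by move/indepP: i2; apply.
Qed.

Lemma leaf_nb (V : {set T}) l : deg e V l <= 1 ->
  exists u, (u = l \/ e l u) /\ forall y, y \in V -> e l y -> y = u.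
Proof.
rewrite /deg; set N := [set y in V | e l y] => hN.
have : (#|N| == 0) || (#|N| == 1) by case: #|N| hN => [|[|]].
case/orP => [/eqP /cards0_eq N0|/cards1P [u Nu]].
  exists l; split; first by left.
  move=> y yV ely; have : y \in N by rewrite inE yV ely.
  by rewrite N0 inE.
have : u \in N by rewrite Nu inE.
rewrite inE => /andP [_ elu]; exists u; split; first by right.
move=> y yV ely; have : y \in N by rewrite inE yV ely.
by rewrite Nu inE => /eqP.
Qed.

Lemma HP_empty b (V : {set T}) : V = set0 -> HP e b V.
Proof. by move=> -> D; rewrite set0D ltnn. Qed.

Definition forestP (V : {set T}) :=
  forall A : {set T}, A \subset V -> A != set0 -> #|edges_in e A| < #|A|.

Definition pfP (V : {set T}) := forall A : {set T}, A \subset V -> #|edges_in e A| <= #|A|.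

Lemma sum_ge2 (V : {set T}) : (forall v, v \in V -> 2 <= deg e V v) ->
  2 * #|V| <= 2 * #|edges_in e V|.
Proof.
move=> H; rewrite -handshake // mulnC -sum_nat_const; exact: leq_sum.
Qed.

Lemma has_leaf (V : {set T}) : V != set0 -> #|edges_in e V| < #|V| ->
  exists2 l, l \in V & deg e V l <= 1.
Proof.
move=> V0 hE; case: (boolP [exists l in V, deg e V l <= 1]).
  by case/exists_inP => l lV hl; exists l.
move/exists_inPn => H.
have : forall v, v \in V -> 2 <= deg e V v by move=> v vV; move: (H v vV); rewrite -ltnNge.
move/sum_ge2; lia.
Qed.

End Helly2.



Lemma sum_lt (T : finType) (A : {set T}) (f g : T -> nat) x : x \in A ->
  (forall v, v \in A -> f v <= g v) -> f x < g x ->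
  \sum_(v in A) f v < \sum_(v in A) g v.
Proof.
move=> xA hle hlt; rewrite (bigD1 x) //= [X in _ < X](bigD1 x) //=.
have : \sum_(i in A | i != x) f i <= \sum_(i in A | i != x) g i.
  by apply: leq_sum => i /andP [iA _]; apply: hle.
lia.
Qed.

Section Helly3.
Variables (T : finType) (e : rel T).
Hypothesis esym : symmetric e.
Hypothesis eirr : irreflexive e.

Lemma card_rm2 (V : {set T}) l u : l \in V -> #|V :\: [set l; u]| < #|V|.
Proof.
move=> lV; have h : #|V :\: [set l; u]| <= #|V :\ l|.
  by apply: subset_leq_card; ssub.
have := cardsD1 l V; rewrite lV; lia.
Qed.

Lemma forest_HP n (V : {set T}) : #|V| <= n -> forestP e V -> HP e 2 V.
Proof.
elim: n V => [|n IH] V cV fV.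
  by apply: HP_empty; apply/cards0_eq; lia.
case: (set_0Vmem V) => [->|[v vV]]; first exact: HP_empty.
have V0 : V != set0 by apply/set0Pn; exists v.
have [l lV hl] := has_leaf esym eirr V0 (fV V (subxx V) V0).
have [u [Hu Hl]] := leaf_nb hl.
apply: (@leaf_step T e esym eirr 2 V l u) => //.
apply: IH.
  have := card_rm2 u lV; lia.
move=> A sA A0; apply: fV => //; exact: subset_trans sA (subsetDl _ _).
Qed.

Lemma pf_HP n (V : {set T}) : #|V| <= n -> pfP e V -> HP e 3 V.
Proof.
elim: n V => [|n IH] V cV pV.
  by apply: HP_empty; apply/cards0_eq; lia.
have pS : forall S : {set T}, S \subset V -> pfP e S.
  move=> S sS A sA; apply: pV; exact: subset_trans sA sS.
case: (boolP [exists l in V, deg e V l <= 1]) => [/exists_inP [l lV hl]|/exists_inPn Hdeg].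
  have [u [Hu Hl]] := leaf_nb hl.
  apply: (@leaf_step T e esym eirr 3 V l u) => //.
  apply: IH; first by have := card_rm2 u lV; lia.
  apply: pS; exact: subsetDl.
have Hd2 : forall v, v \in V -> 2 <= deg e V v.
  by move=> v vV; move: (Hdeg v vV); rewrite -ltnNge.
case: (boolP [exists C : {set T}, [&& C \subset V, C != set0, ~~ (V \subset C) &
    [forall x in C, forall y in V :\: C, ~~ e x y]]]).
  case/existsP => C /and4P [sC C0 nVC /forall_inP Hc].
  have Hc' : forall x y, x \in C -> y \in V :\: C -> ~~ e x y.
    by move=> x y xC yVC; move/forall_inP: (Hc x xC) => /(_ y yVC).
  have Hgen : forall D0 : {set T}, alpha e (V :\: D0) = alpha e (C :\: D0) + alpha e ((V :\: C) :\: D0).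
    move=> D0; rewrite (@alpha_splitC T e esym (V :\: D0) C).
      have e1 : (V :\: D0) :&: C = C :\: D0.
        apply/setP => x; rewrite !inE; case xC: (x \in C); rewrite /= ?andbF ?andbT //.
        by rewrite (subsetP sC x xC) andbT.
      have e2 : (V :\: D0) :\: C = (V :\: C) :\: D0 by apply/setP => x; rewrite !inE; bsolve.
      by rewrite e1 e2.
    move=> x y; rewrite !inE => /andP [_ xC] /andP [yC /andP [_ yV]].
    by apply: Hc' xC _; rewrite inE yC yV.
  have HV : alpha e V = alpha e C + alpha e (V :\: C) by rewrite -(setD0 V) Hgen !setD0.
  have cC : #|C| < #|V|.
    by apply: proper_card; rewrite properE sC.
  have cVC : #|V :\: C| < #|V|.
    case/set0Pn: C0 => c cC'; have := cardsD1 c V; rewrite (subsetP sC c cC').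
    have : #|V :\: C| <= #|V :\ c| by apply: subset_leq_card; apply: setDS; rewrite sub1set.
    lia.
  move=> D HD; rewrite Hgen HV in HD.
  case: (ltnP (alpha e (C :\: D)) (alpha e C)) => h.
    have [D' [sD' cD' hD']] := IH C (ltac:(lia)) (pS C sC) D h.
    exists D'; split => //; rewrite Hgen HV.
    have : alpha e ((V :\: C) :\: D') <= alpha e (V :\: C) by apply: alpha_mono; apply: subsetDl.
    lia.
  have h2 : alpha e ((V :\: C) :\: D) < alpha e (V :\: C) by lia.
  have [D' [sD' cD' hD']] := IH (V :\: C) (ltac:(lia)) (pS _ (subsetDl _ _)) D h2.
  exists D'; split => //; rewrite Hgen HV.
  have : alpha e (C :\: D') <= alpha e C by apply: alpha_mono; apply: subsetDl.
  lia.
move/existsPn => nosplit.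
move=> D HD.
have [VD0|[d dVD]] := set_0Vmem (V :&: D).
  have : V :\: D = V.
    apply/setP => x; rewrite inE; case xV: (x \in V); rewrite ?andbF //= andbT.
    apply/negP => xD; have : x \in V :&: D by rewrite inE xV xD.
    by rewrite VD0 inE.
  by move=> h; rewrite h ltnn in HD.
move: dVD; rewrite inE => /andP [dV dD].
set V' := V :\ d.
have fV' : forestP e V'.
  move=> A sA A0; rewrite ltnNge; apply/negP => hA.
  have sAV : A \subset V by apply: subset_trans sA (subsetDl _ _).
  have hA' : #|edges_in e A| = #|A| by have := pV A sAV; lia.
  have dA : d \notin A by apply/negP => /(subsetP sA); rewrite !inE eqxx.
  move: (nosplit A); rewrite sAV A0 /=.
  have -> : ~~ (V \subset A) by apply/subsetPn; exists d.
  move=> /forall_inPn [x xA /forall_inPn [y yVA /negPn exy]].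
  have hV := handshake esym eirr V.
  have hEV := pV V (subxx V).
  have hAs := handshake esym eirr A.
  have hsp : \sum_(v in V) deg e V v = \sum_(v in V :&: A) deg e V v + \sum_(v in V :\: A) deg e V v.
    by rewrite (big_setID A).
  rewrite (setIidPr sAV) in hsp.
  have h1 : 2 * #|V :\: A| <= \sum_(v in V :\: A) deg e V v.
    rewrite mulnC -sum_nat_const; apply: leq_sum => v; rewrite inE => /andP [_ vV].
    exact: Hd2.
  have h2 : \sum_(v in A) deg e A v < \sum_(v in A) deg e V v.
    apply: (sum_lt xA).
      move=> v vA; apply: subset_leq_card; apply/subsetP => z; rewrite !inE.
      by case/andP => zA ->; rewrite (subsetP sAV z zA).
    apply: proper_card; apply/properP; split.
      apply/subsetP => z; rewrite !inE.
      by case/andP => zA ->; rewrite (subsetP sAV z zA).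
    exists y; first by move: yVA; rewrite !inE => /andP [_ ->]; rewrite exy.
    by move: yVA; rewrite !inE => /andP [/negbTE ->].
  have hc := cardsID A V; rewrite (setIidPr sAV) in hc.
  simpl in hsp.
  lia.
case: (ltnP (alpha e V') (alpha e V)) => hV'.
  exists [set d]; split => //; first by rewrite sub1set.
  by rewrite cards1.
have eV' : alpha e V' = alpha e V.
  by apply/eqP; rewrite eqn_leq hV' andbT; apply: alpha_mono; apply: subsetDl.
have h : alpha e (V' :\: D) < alpha e V'.
  rewrite eV'; apply: leq_ltn_trans HD; apply: alpha_mono; rewrite /V'; ssub.
have [D'' [s c hh]] := forest_HP (leqnn #|V'|) fV' h.
exists (d |: D''); split.
- by rewrite subUset sub1set dD s.
- by have := cardsU1 d D''; lia.
- rewrite -eV'; apply: leq_ltn_trans hh; apply: alpha_mono; rewrite /V'; ssub.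
Qed.

End Helly3.


Section Comp.
Variables (T : finType) (e : rel T).
Hypothesis esym : symmetric e.
Hypothesis eirr : irreflexive e.

Lemma edges_in0 : edges_in e set0 = set0.
Proof.
apply/setP => E; rewrite inE [RHS]inE; apply/negP => /and3P [c2 s _].
by move: s; rewrite subset0 => /eqP E0; rewrite E0 cards0 in c2.
Qed.

Lemma edges_in_mono (A B : {set T}) : A \subset B -> edges_in e A \subset edges_in e B.
Proof.
move=> sAB; apply/subsetP => E; rewrite !inE => /and3P [-> sEA ->].
by rewrite (subset_trans sEA sAB).
Qed.

Lemma growth (P : {set T}) : connected_in e P -> forall n (A : {set T}),
  #|P :\: A| <= n -> A \subset P -> A != set0 ->
  #|edges_in e A| + #|P :\: A| <= #|edges_in e P|.
Proof.
move=> cP n; elim: n => [|n IH] A cA sA A0.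
  have : P :\: A = set0 by apply/cards0_eq; lia.
  move/eqP; rewrite setD_eq0 => sPA.
  have -> : A = P by apply/eqP; rewrite eqEsubset sA sPA.
  by rewrite setDv cards0 addn0.
case: (boolP (P \subset A)) => hPA.
  have -> : A = P by apply/eqP; rewrite eqEsubset sA hPA.
  by rewrite setDv cards0 addn0.
have : [exists x in A, exists y in P :\: A, e x y].
  case: (boolP [exists x in A, exists y in P :\: A, e x y]) => // /exists_inPn Hn.
  exfalso.
  case/set0Pn: A0 => a aA; case/subsetPn: hPA => z zP zA.
  have cl : closed (fun a b => [&& a \in P, b \in P & e a b]) A.
    move=> x y /and3P [xP yP exy]; apply/idP/idP => [xA|yA].
      apply/negPn/negP => yA; move/exists_inPn: (Hn x xA) => /(_ y).
      by rewrite inE yA yP exy => /(_ isT).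
    apply/negPn/negP => xA; move/exists_inPn: (Hn y yA) => /(_ x).
    by rewrite inE xA xP esym exy => /(_ isT).
  have := closed_connect cl (cP a z (subsetP sA a aA) zP).
  by rewrite aA (negbTE zA).
case/exists_inP => x xA /exists_inP [y yPA exy].
move: (yPA); rewrite inE => /andP [yA yP].
have h1 : P :\: (y |: A) = (P :\: A) :\ y by apply/setP => z; rewrite !inE; eqcases; bsolve.
have c1 : #|P :\: A| = (#|P :\: (y |: A)|).+1.
  by rewrite h1; have := cardsD1 y (P :\: A); rewrite yPA; lia.
have A'0 : y |: A != set0 by apply/set0Pn; exists y; rewrite !inE eqxx.
have sA' : y |: A \subset P by rewrite subUset sub1set yP sA.
have := IH (y |: A) (ltac:(lia)) sA' A'0.
have c2 : #|edges_in e A| < #|edges_in e (y |: A)|.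
  apply: proper_card; apply/properP; split; first by apply: edges_in_mono; apply: subsetUr.
  exists [set x; y].
    by apply: edge2_in => //; rewrite !inE ?eqxx ?xA ?orbT.
  rewrite inE; apply/negP => /and3P [_ s _]; move: (subsetP s y).
  by rewrite !inE eqxx orbT (negbTE yA) => /(_ isT).
lia.
Qed.

Lemma comp_pf (S P : {set T}) : component e S P -> pseudoforest e S -> pfP e P.
Proof.
move=> cP Hpf A sA; have [sPS P0 cnP _] := cP.
have hP := Hpf P cP.
case: (set_0Vmem A) => [->|[a aA]]; first by rewrite edges_in0 cards0.
have A0 : A != set0 by apply/set0Pn; exists a.
have := growth cnP (leqnn _) sA A0.
have := cardsID A P; rewrite (setIidPr sA).
lia.
Qed.

Lemma comp_eq (S P Q : {set T}) z : component e S P -> component e S Q ->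
  z \in P -> z \in Q -> P = Q.
Proof.
have key : forall P Q : {set T}, component e S P -> component e S Q ->
    z \in P -> z \in Q -> Q \subset P.
  move=> P1 Q1 [sP _ _ hP] [sQ _ cQ _] zP zQ; apply/subsetP => y yQ.
  have cl : closed (fun a b => [&& a \in Q1, b \in Q1 & e a b]) P1.
    move=> a b /and3P [aQ bQ eab]; apply/idP/idP => [aP|bP].
      apply/negPn/negP => bP; move: (hP a b aP).
      by rewrite inE bP (subsetP sQ b bQ) eab => /(_ isT).
    apply/negPn/negP => aP; move: (hP b a bP).
    by rewrite inE aP (subsetP sQ a aQ) esym eab => /(_ isT).
  by rewrite -(closed_connect cl (cQ z y zQ yQ)).
move=> cP cQ zP zQ; apply/eqP; rewrite eqEsubset.
by rewrite (key P Q) // (key Q P).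
Qed.

End Comp.

Unset Implicit Arguments.
Import Order.TTheory GRing.Theory Num.Theory.

Lemma intfact (k : int) (a b c : nat) : (k <= a%:Z)%R -> a <= b + c -> (k - b%:Z <= c%:Z)%R.
Proof. move=> h1 h2. lia. Qed.
Lemma intfact2 (k : int) (a b c : nat) : (k - b%:Z <= a%:Z)%R -> a + b <= c -> (k <= c%:Z)%R.
Proof. move=> h1 h2. lia. Qed.


Theorem lemma5 (T : finType) (e : rel T) (esym : symmetric e) (eirr : irreflexive e)
  (X : {set T}) (k : int)
  (Hpf : pseudoforest e (~: X))
  (H1 : forall v, v \in X -> conf e (~: X) [set v] < #|X|)
  (H2 : forall u v, u \in X -> v \in X -> u != v -> ~~ e u v ->
          conf e (~: X) [set u; v] < #|X|)
  (H3 : forall u v w, u \in X -> v \in X -> w \in X ->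
          u != v -> u != w -> v != w -> indep e [set u; v; w] ->
          #|X| <= conf e (~: X) [set u; v; w] ->
          exists Q, anchor_triangle e X Q /\ nbhd e Q = [set u; v; w])
  (P : {set T}) (HP : component e (~: X) P)
  (HPnr : ~ nonredundant_anchor_triangle e X P)
  (HPc : forall Xp, chunk e X Xp -> conf e P Xp = 0) :
  (exists I : {set T}, indep e I /\ (k <= (#|I|)%:Z)%R) <->
  (exists I : {set T}, I \subset ~: P /\ indep e I /\
                       (k - (alpha e P)%:Z <= (#|I|)%:Z)%R).
Proof.
have [sPX P0 cnP hPc] := HP.
split.
  case=> I [iI hk]; exists (I :\: P); split; first by apply/subsetP => x; rewrite !inE => /andP [].
  split; first by apply: indep_sub iI; apply: subsetDl.
  have h : #|I :&: P| <= alpha e P.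
    by apply: alpha_ge; [apply: subsetIr | apply: indep_sub iI; apply: subsetIl].
  have := cardsID P I; lia.
have step : forall I : {set T}, I \subset ~: P -> indep e I ->
    (forall I' : {set T}, #|I' :&: X| < #|I :&: X| -> I' \subset ~: P -> indep e I' ->
       exists J : {set T}, indep e J /\ #|I'| + alpha e P <= #|J|) ->
    exists J : {set T}, indep e J /\ #|I| + alpha e P <= #|J|.
  move=> I sI iI IH.
  have notP : forall x, x \in I -> x \notin P.
    by move=> x xI; move: (subsetP sI x xI); rewrite inE.
  set X' := I :&: X.
  case: (leqP (alpha e P) (alpha e (P :\: nbhd e X'))) => hc.
    have [K [sK iK cK]] := alpha_wit e (P :\: nbhd e X').
    have cross : forall x y, x \in I -> y \in K -> ~~ e x y.
      move=> x y xI yK; move: (subsetP sK y yK); rewrite !inE negb_and negbK => /andP [yN yP].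
      case: (boolP (x \in X)) => xX.
        apply/negP => exy; move: yN => /orP [yX'|]; last first.
          by move/exists_inPn => /(_ x); rewrite inE xI xX exy => /(_ isT).
        by move: (subsetP sPX y yP) yX'; rewrite !inE => /negbTE ->; rewrite andbF.
      by rewrite esym; apply: hPc => //; rewrite !inE xX (notP x xI).
    exists (I :|: K); split.
      apply/indepP => x y; rewrite inE => /orP [xI|xK]; rewrite inE => /orP [yI|yK].
      - by move/indepP: iI; apply.
      - exact: cross.
      - rewrite esym; exact: cross.
      - by move/indepP: iK; apply.
    have d : I :&: K = set0.
      apply/setP => x; rewrite !inE; apply/negP => /andP [xI xK].
      move: (subsetP sK x xK); rewrite !inE => /andP [_ xP].
      by move: (notP x xI); rewrite xP.
    by have := cardsUI I K; rewrite d cards0; lia.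
  have pP : pfP e P := comp_pf esym eirr HP Hpf.
  have [D' [sD' cD' hD']] := @pf_HP T e esym eirr #|P| P (leqnn _) pP _ hc.
  have fex : forall d, d \in D' -> exists2 x, x \in X' & e x d.
    move=> d dD; move: (subsetP sD' d dD); rewrite inE => /andP [_ /exists_inP [x xX' exd]].
    by exists x.
  pose f := fun d => odflt d [pick x in X' | e x d].
  have fP : forall d, d \in D' -> f d \in X' /\ e (f d) d.
    move=> d dD; rewrite /f; case: pickP => [x /andP [xX' exd] | none] //=.
    by have [x xX' exd] := fex d dD; move: (none x); rewrite xX' exd.
  set X2 := f @: D'.
  have sX2 : X2 \subset X' by apply/subsetP => x /imsetP [d dD ->]; case: (fP d dD).
  have cX2 : #|X2| <= 3 := leq_trans (leq_imset_card _ _) cD'.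
  have hX2 : alpha e (P :\: nbhd e X2) < alpha e P.
    apply: leq_ltn_trans hD'; apply: alpha_mono; apply/subsetP => y.
    rewrite inE [y \in P :\: _]inE => /andP [yN yP]; rewrite yP andbT.
    apply/negP => yD; move: yN; have [fX fe] := fP y yD.
    have yX' : y \notin X' by move: (subsetP sD' y yD); rewrite inE => /andP [].
    rewrite inE negb_and negbK => /orP [yX2|/exists_inPn H].
      by move: yX'; rewrite (subsetP sX2 y yX2).
    by move: (H (f y) (imset_f f yD)); rewrite fe.
  have X20 : X2 != set0.
    case: (set_0Vmem D') => [D0|[d dD]]; first by rewrite D0 setD0 ltnn in hD'.
    by apply/set0Pn; exists (f d); exact: imset_f.
  have sX2I : X2 \subset I by apply: subset_trans sX2 (subsetIl _ _).
  have sX2X : X2 \subset X by apply: subset_trans sX2 (subsetIr _ _).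
  have iX2 : indep e X2 := indep_sub sX2I iI.
  have nchunk : #|X| <= conf e (~: X) X2.
    rewrite leqNgt; apply/negP => hlt.
    have : conf e P X2 = 0 by apply: HPc; split => //; rewrite card_gt0 X20 cX2.
    rewrite /conf; lia.
  have c0 : 0 < #|X2| by rewrite card_gt0.
  have : (#|X2| == 1) || (#|X2| == 2) || (#|X2| == 3) by lia.
  case/orP => [/orP [/cards1P [v ev] | /cards2P [u [v [uv ev]]]] | c3].
  - have vX : v \in X by apply: (subsetP sX2X); rewrite ev inE.
    by move: nchunk; rewrite ev leqNgt (H1 v vX).
  - have uX : u \in X by apply: (subsetP sX2X); rewrite ev !inE eqxx.
    have vX : v \in X by apply: (subsetP sX2X); rewrite ev !inE eqxx orbT.
    have nuv : ~~ e u v by move/indepP: iX2; apply; rewrite ev !inE eqxx ?orbT.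
    by move: nchunk; rewrite ev leqNgt (H2 u v uX vX uv nuv).
  case/set0Pn: X20 => u uX2.
  have : #|X2 :\ u| == 2 by move: (cardsD1 u X2); rewrite uX2 (eqP c3) add1n => [[<-]].
  case/cards2P => v [w [vw e2]].
  have vX2 : v \in X2 :\ u by rewrite e2 !inE eqxx.
  have wX2 : w \in X2 :\ u by rewrite e2 !inE eqxx orbT.
  move: vX2 wX2; rewrite !inE => /andP [vu vX2] /andP [wu wX2].
  have ev : X2 = [set u; v; w].
    apply/setP => x; move/setP: e2 => /(_ x); rewrite !inE.
    by case: (x =P u) => [->|_] /=; [rewrite uX2 | move=> ->].
  have uX : u \in X by apply: (subsetP sX2X).
  have vX : v \in X by apply: (subsetP sX2X).
  have wX : w \in X by apply: (subsetP sX2X).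
  have [Q [aQ nQ]] := H3 u v w uX vX wX (ltac:(by rewrite eq_sym)) (ltac:(by rewrite eq_sym)) vw
    (ltac:(by rewrite -ev)) (ltac:(by rewrite -ev)).
  have [Q2 [aQ2 [Q2P nQ2]]] : exists Q2, anchor_triangle e X Q2 /\ Q2 <> P /\ nbhd e Q2 = X2.
    case: (Q =P P) => [QP|QP]; last by exists Q; rewrite ev.
    apply: NNPP => hn; apply: HPnr; split; first by rewrite -QP.
    move=> Q' aQ' Q'P hnb; apply: hn; exists Q'; split => //; split => //.
    by rewrite hnb -QP nQ ev.
  case: aQ2 => cQ2 [p1 [p2 [p3 [x1 [x2 [x3 [[eQ dst] xs n1 n2 n3]]]]]]].
  move: xs => /and3P [x1X x2X x3X].
  have [sQX _ _ _] := cQ2.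
  have nbI : forall p x, p \in Q2 -> x \in X -> e p x -> x \in I.
    move=> p x pQ xX epx.
    have : x \in nbhd e Q2.
      rewrite inE; apply/andP; split.
        by apply/negP => /(subsetP sQX); rewrite inE xX.
      by apply/exists_inP; exists p.
    by rewrite nQ2 => /(subsetP sX2I).
  have p1Q : p1 \in Q2 by rewrite eQ !inE eqxx.
  have p2Q : p2 \in Q2 by rewrite eQ !inE eqxx orbT.
  have p3Q : p3 \in Q2 by rewrite eQ !inE eqxx !orbT.
  have ep1 : e p1 x1 by move/setP: n1 => /(_ x1); rewrite !inE eqxx !orbT.
  have ep2 : e p2 x2 by move/setP: n2 => /(_ x2); rewrite !inE eqxx !orbT.
  have ep3 : e p3 x3 by move/setP: n3 => /(_ x3); rewrite !inE eqxx !orbT.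
  have x1I := nbI p1 x1 p1Q x1X ep1.
  have x2I := nbI p2 x2 p2Q x2X ep2.
  have x3I := nbI p3 x3 p3Q x3X ep3.
  have pnI : forall p x, x \in I -> e p x -> p \notin I.
    move=> p x xI epx; apply/negP => pI; move/indepP: iI => /(_ p x pI xI).
    by rewrite epx.
  have p1I := pnI p1 x1 x1I ep1.
  have p2I := pnI p2 x2 x2I ep2.
  have p3I := pnI p3 x3 x3I ep3.
  have p1P : p1 \notin P.
    by apply/negP => p1P; apply: Q2P; symmetry; exact: (comp_eq esym HP cQ2 p1P p1Q).
  have p1X : p1 \notin X by move: (subsetP sQX p1 p1Q); rewrite inE.
  have hp1 : forall y, y \in I :\ x1 -> ~~ e p1 y.
    move=> y; rewrite !inE => /andP [yx1 yI]; apply/negP => ep.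
    have : y \in [set y | e p1 y] by rewrite inE.
    rewrite n1 !inE => /orP [/orP [/eqP yp2|/eqP yp3]|/eqP yx].
    - by move: p2I; rewrite -yp2 yI.
    - by move: p3I; rewrite -yp3 yI.
    - by move: yx1; rewrite yx eqxx.
  set I' := p1 |: (I :\ x1).
  have cI' : #|I' :&: X| < #|I :&: X|.
    have : #|I' :&: X| <= #|(I :&: X) :\ x1|.
      apply: subset_leq_card; apply/subsetP => x; rewrite !inE.
      case: (x =P p1) => [->|_] /=; first by rewrite (negbTE p1X) andbF.
      by case: (x == x1); bsolve.
    by rewrite [X in _ < X](cardsD1 x1 (I :&: X)) inE x1I x1X /= add1n ltnS.
  have sI' : I' \subset ~: P.
    apply/subsetP => x; rewrite !inE => /orP [/eqP ->|/andP [_ xI]]; first by [].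
    by move: (notP x xI).
  have iI' : indep e I'.
    apply/indepP => x y; rewrite !inE => /orP [/eqP ->|xI] /orP [/eqP ->|yI].
    - by rewrite eirr.
    - by apply: hp1; rewrite !inE.
    - by rewrite esym; apply: hp1; rewrite !inE.
    - move: xI yI => /andP [_ xI] /andP [_ yI]; by move/indepP: iI; apply.
  have [J [iJ hJ]] := IH I' cI' sI' iI'.
  exists J; split => //.
  have hI' : #|I'| = #|I|.
    rewrite /I' cardsU1 inE negb_and p1I orbT /=.
    by rewrite [RHS](cardsD1 x1 I) x1I.
  by rewrite -hI'.
have main : forall n (I : {set T}), #|I :&: X| <= n -> I \subset ~: P -> indep e I ->
    exists J : {set T}, indep e J /\ #|I| + alpha e P <= #|J|.
  elim=> [|n IH] I cI sI iI; apply: step => // I' cI'; first by lia.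
  by apply: IH; lia.
case=> I [sI [iI hk]].
have [J [iJ hJ]] := main _ I (leqnn _) sI iI.
exists J; split => //; lia.
Qed.
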